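(* Let $A$ be a real $m\times m$ matrix, $f,f_\delta\in\mathbb{R}^m$ with $\|f_\delta-f\|\le\delta$, $q\in(0,1)$. Define $u_1=u_1^\delta=0$, $u_{n+1}=q^nT_{q^n}^{-1}u_n+T_{q^n}^{-1}A^*f$ and $u_{n+1}^\delta=q^nT_{q^n}^{-1}u_n^\delta+T_{q^n}^{-1}A^*f_\delta$ for $n\ge1$. Then for all $n\ge1$, $$\|u_n^\delta-u_n\|\le\frac{\sqrt q}{1-\sqrt q}\,\frac{\delta}{2\sqrt{q^n}}.$$
   Context: $A^*$ is the transpose of $A$, $T:=A^*A$, $T_a:=T+aI$ for $a>0$; $\|\cdot\|$ is the Euclidean norm. *)

(* Defs.v *)
(* the statement is purely algebraic (matrix inverse, sums,
   square roots), so it is stated over an arbitrary real closed field R. *)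
From HB Require Import structures.
From mathcomp Require Import all_boot all_order all_algebra.
Set Implicit Arguments. Unset Strict Implicit. Unset Printing Implicit Defensive.
Import Order.TTheory GRing.Theory Num.Theory.
Local Open Scope ring_scope.

Definition enorm (R : rcfType) (m : nat) (v : 'cV[R]_m) : R :=
  Num.sqrt (\sum_(i < m) v i 0 ^+ 2).

Definition Tmat (R : rcfType) (m : nat) (A : 'M[R]_m) : 'M[R]_m := A^T *m A.
Definition Ta (R : rcfType) (m : nat) (A : 'M[R]_m) (a : R) : 'M[R]_m :=
  Tmat A + a%:M.

(* useq_aux A q g k = u_{k+1}:
   u_1 = 0,  u_{n+1} = q^n T_{q^n}^{-1} u_n + T_{q^n}^{-1} A^* g  (n >= 1) *)
Fixpoint useq_aux (R : rcfType) (m : nat) (A : 'M[R]_m) (q : R)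
    (g : 'cV[R]_m) (k : nat) : 'cV[R]_m :=
  match k with
  | 0 => 0
  | k'.+1 =>
      q ^+ k *: (invmx (Ta A (q ^+ k)) *m useq_aux A q g k')
      + invmx (Ta A (q ^+ k)) *m (A^T *m g)
  end.

Definition useq (R : rcfType) (m : nat) (A : 'M[R]_m) (q : R)
    (g : 'cV[R]_m) (n : nat) : 'cV[R]_m := useq_aux A q g n.-1.

(* Main.v *)
Require Import Defs.
From HB Require Import structures.
From mathcomp Require Import all_boot all_order all_algebra.
Import Order.TTheory GRing.Theory Num.Theory.
Set Implicit Arguments. Unset Strict Implicit.
Local Open Scope ring_scope.

Section Dot.
Variable R : rcfType.
Variable m : nat.
Implicit Types x y z : 'cV[R]_m.

Definition dot x y : R := \sum_(i < m) x i 0 * y i 0.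

Lemma dotC x y : dot x y = dot y x.
Proof. by apply: eq_bigr => i _; rewrite mulrC. Qed.

Lemma dotDl x y z : dot (x + y) z = dot x z + dot y z.
Proof. by rewrite /dot -big_split; apply: eq_bigr => i _; rewrite !mxE mulrDl. Qed.

Lemma dotDr x y z : dot z (x + y) = dot z x + dot z y.
Proof. by rewrite dotC dotDl !(dotC z). Qed.

Lemma dotZl a x y : dot (a *: x) y = a * dot x y.
Proof. by rewrite /dot mulr_sumr; apply: eq_bigr => i _; rewrite !mxE mulrA. Qed.

Lemma dotZr a x y : dot y (a *: x) = a * dot y x.
Proof. by rewrite dotC dotZl dotC. Qed.

Lemma dotNl x y : dot (- x) y = - dot x y.
Proof. by rewrite -scaleN1r dotZl mulN1r. Qed.

Lemma dotNr x y : dot y (- x) = - dot y x.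
Proof. by rewrite dotC dotNl dotC. Qed.

Lemma dot_ge0 x : 0 <= dot x x.
Proof. by apply: sumr_ge0 => i _; rewrite -expr2 sqr_ge0. Qed.

Lemma dot_eq0 x : dot x x = 0 -> x = 0.
Proof.
move=> H; apply/matrixP => i j; rewrite (ord1 j) mxE.
have h0 : forall k : 'I_m, true -> 0 <= x k 0 * x k 0.
  by move=> k _; rewrite -expr2 sqr_ge0.
have := @psumr_eq0P _ _ _ _ h0 H i isT.
by move/eqP; rewrite mulf_eq0 orbb => /eqP.
Qed.

Lemma dot_mul (M : 'M[R]_m) x y : dot x (M *m y) = dot (M^T *m x) y.
Proof.
rewrite /dot.
transitivity (\sum_(i < m) \sum_(j < m) x i 0 * M i j * y j 0).
  by apply: eq_bigr => i _; rewrite mxE mulr_sumr; apply: eq_bigr => j _; rewrite mulrA.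
rewrite exchange_big; apply: eq_bigr => j _; rewrite mxE mulr_suml.
by apply: eq_bigr => i _; rewrite mxE (mulrC (M i j)).
Qed.

Lemma enormE x : enorm x = Num.sqrt (dot x x).
Proof. by rewrite /enorm /dot; congr Num.sqrt; apply: eq_bigr => i _; rewrite expr2. Qed.

End Dot.

Section Dot2.
Variable R : rcfType.
Variable m : nat.
Implicit Types x y z : 'cV[R]_m.

Lemma amgm x y : 2 * dot x y <= dot x x + dot y y.
Proof.
have := dot_ge0 (x - y).
rewrite dotDl !dotDr !dotNl !dotNr (dotC y x) opprK.
move=> h; rewrite mulr_natl mulr2n -subr_ge0.
suff -> : dot x x + dot y y - (dot x y + dot x y) = dot x x - dot x y + (- dot x y + dot y y) by [].
by rewrite opprD addrACA [dot y y + _]addrC.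
Qed.

Lemma dot0l y : dot 0 y = 0.
Proof. by rewrite /dot big1 // => i _; rewrite mxE mul0r. Qed.

Lemma enorm_ge0 x : 0 <= enorm x.
Proof. exact: sqrtr_ge0. Qed.

Lemma enorm_sq x : enorm x ^+ 2 = dot x x.
Proof. by rewrite enormE sqr_sqrtr // dot_ge0. Qed.

Lemma enorm_eq0 x : enorm x = 0 -> x = 0.
Proof.
move=> h; apply: dot_eq0; apply/eqP; rewrite eq_le dot_ge0 andbT.
by rewrite -sqrtr_eq0 -enormE h.
Qed.

Lemma unit_dot x : enorm x != 0 -> dot ((enorm x)^-1 *: x) ((enorm x)^-1 *: x) = 1.
Proof.
move=> h; rewrite dotZl dotZr -enorm_sq expr2 mulKf //.
by rewrite mulVf.
Qed.

Lemma CS x y : dot x y <= enorm x * enorm y.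
Proof.
have [ha|ha] := eqVneq (enorm x) 0.
  by rewrite ha mul0r (enorm_eq0 ha) dot0l.
have [hb|hb] := eqVneq (enorm y) 0.
  by rewrite hb mulr0 (enorm_eq0 hb) dotC dot0l.
have pa : 0 < enorm x by rewrite lt0r ha enorm_ge0.
have pb : 0 < enorm y by rewrite lt0r hb enorm_ge0.
have := amgm ((enorm x)^-1 *: x) ((enorm y)^-1 *: y).
rewrite !unit_dot // dotZl dotZr.
have -> : (1 + 1 : R) = 2 * 1 by rewrite mulr1 mulr2n.
rewrite ler_pM2l; last by [].
rewrite ler_pdivrMl // ler_pdivrMl //.
by rewrite mulr1 mulrC.
Qed.

Lemma enorm_triangle x y : enorm (x + y) <= enorm x + enorm y.
Proof.
rewrite [enorm (x + y)]enormE -(ger0_norm (addr_ge0 (enorm_ge0 x) (enorm_ge0 y))).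
rewrite -sqrtr_sqr ler_sqrt; last by rewrite sqr_ge0.
rewrite sqrrD !enorm_sq dotDl !dotDr (dotC y x).
rewrite addrA lerD2r -addrA lerD2l mulr2n; apply: lerD; exact: CS.
Qed.

End Dot2.

Section Mat.
Variable R : rcfType.
Variable m : nat.
Variable A : 'M[R]_m.
Variable a : R.
Hypothesis ha : 0 < a.

Lemma Ta_mul (y : 'cV[R]_m) : Ta A a *m y = Tmat A *m y + a *: y.
Proof. by rewrite /Ta mulmxDl mul_scalar_mx. Qed.

Lemma dotT (y : 'cV[R]_m) : dot y (Tmat A *m y) = dot (A *m y) (A *m y).
Proof. by rewrite /Tmat -mulmxA dot_mul trmxK. Qed.

Lemma key1 (y : 'cV[R]_m) : a ^+ 2 * dot y y <= dot (Ta A a *m y) (Ta A a *m y).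
Proof.
rewrite Ta_mul dotDl !dotDr !dotZl !dotZr [dot (Tmat A *m y) y]dotC dotT.
rewrite expr2 -mulrA addrA -[X in X <= _]add0r lerD2r.
have ha' := ltW ha.
by rewrite !addr_ge0 ?mulr_ge0 ?dot_ge0.
Qed.

Lemma Ta_sym : (Ta A a)^T = Ta A a.
Proof. by rewrite /Ta /Tmat linearD /= trmx_mul trmxK tr_scalar_mx. Qed.

Lemma Ta_inj (y : 'cV[R]_m) : Ta A a *m y = 0 -> y = 0.
Proof.
move=> H; apply: dot_eq0; apply/eqP; rewrite eq_le dot_ge0 andbT.
have h := key1 y; rewrite H dot0l in h.
by rewrite pmulr_rle0 ?exprn_gt0 in h.
Qed.

Lemma Ta_unit : Ta A a \in unitmx.
Proof.
rewrite -row_free_unit -kermx_eq0; apply/eqP/row_matrixP => i; rewrite row0.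
set r := row i (kermx (Ta A a)).
have h : r *m Ta A a = 0 by rewrite /r -row_mul mulmx_ker row0.
have : Ta A a *m r^T = 0 by rewrite -Ta_sym -trmx_mul h trmx0.
by move/Ta_inj => /(congr1 trmx); rewrite trmxK trmx0.
Qed.

Lemma key2 (g y : 'cV[R]_m) : Ta A a *m y = A^T *m g -> 4 * a * dot y y <= dot g g.
Proof.
move=> H.
have E : dot (A *m y) (A *m y) + a * dot y y = dot (A *m y) g.
  have := congr1 (dot y) H.
  by rewrite Ta_mul dotDr dotT dotZr (dot_mul A^T y g) trmxK.
have := amgm g (2 *: (A *m y)).
rewrite dotZr dotZl dotZr dotC -E.
have -> : (4 : R) = 2 * 2 by rewrite -natrM.
by rewrite -!mulrA (mulrDr 2 (dot (A *m y) (A *m y))) (mulrDr 2 (2 * _)) addrC lerD2r.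
Qed.

Lemma bound1 (x : 'cV[R]_m) : enorm (a *: (invmx (Ta A a) *m x)) <= enorm x.
Proof.
have hx : Ta A a *m (invmx (Ta A a) *m x) = x by rewrite mulKVmx ?Ta_unit.
rewrite !enormE ler_sqrt ?dot_ge0 // dotZl dotZr mulrA -expr2.
by have := key1 (invmx (Ta A a) *m x); rewrite hx.
Qed.

Lemma bound2 (g : 'cV[R]_m) :
  enorm (invmx (Ta A a) *m (A^T *m g)) <= enorm g / (2 * Num.sqrt a).
Proof.
set y := invmx (Ta A a) *m (A^T *m g).
have hy : Ta A a *m y = A^T *m g by rewrite /y mulKVmx ?Ta_unit.
have sa : 0 < Num.sqrt a by rewrite sqrtr_gt0.
rewrite ler_pdivlMr ?mulr_gt0 //.
rewrite -(@ler_pXn2r _ 2) // ?nnegrE ?mulr_ge0 ?enorm_ge0 ?(ltW sa) //.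
rewrite exprMn [(2 * _) ^+ 2]exprMn (sqr_sqrtr (ltW ha)) !enorm_sq.
have -> : (2:R)^+2 = 4 by rewrite expr2 -natrM.
by rewrite mulrC; apply: key2.
Qed.

End Mat.

Lemma perm1 (R : rcfType) (x y z w : R) : x * (y * z) * w = y * (x * z * w).
Proof. by rewrite (mulrCA x y z) -(mulrA y). Qed.

Lemma ident3 (R : rcfType) (s d t : R) : s * (d * (1 - t)) + (1 - s) * d = d * (1 - s * t).
Proof.
rewrite !mulrBr !mulr1 mulrBl mul1r addrC addrA subrK.
by rewrite (mulrCA s d).
Qed.

Lemma perm2 (R : rcfType) (E t u v w : R) : E * (t * (u * v)) * w = u * (t * w * v * E).
Proof.
by rewrite [E * _]mulrC perm1 -(mulrA u) [t * v * E * w]mulrAC (mulrAC t v w).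
Qed.

Lemma enorm0 (R : rcfType) m : enorm (0 : 'cV[R]_m) = 0.
Proof. by rewrite enormE dot0l sqrtr0. Qed.

Lemma sqrtX (R : rcfType) (q : R) n : 0 <= q -> Num.sqrt (q ^+ n) = Num.sqrt q ^+ n.
Proof.
move=> hq; rewrite -{1}(sqr_sqrtr hq) exprAC sqrtr_sqr ger0_norm //.
by rewrite exprn_ge0 // sqrtr_ge0.
Qed.

Lemma cancel2 (R : rcfType) (x y z d : R) : x != 0 -> z != 0 ->
  x * y * z * (d / (x * z)) = y * d.
Proof.
move=> hx hz.
by rewrite (mulrAC x y z) -(mulrA (x * z)) (mulrA y d) mulrCA divff ?mulr1 // mulf_neq0.
Qed.

Lemma err_step (R : rcfType) m (A : 'M[R]_m) (q : R) (fd f : 'cV[R]_m) k :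
  0 < q ->
  enorm (useq_aux A q fd k.+1 - useq_aux A q f k.+1)
  <= enorm (useq_aux A q fd k - useq_aux A q f k)
     + enorm (fd - f) / (2 * Num.sqrt q ^+ k.+1).
Proof.
move=> hq.
have ha : 0 < q ^+ k.+1 by rewrite exprn_gt0.
have -> : useq_aux A q fd k.+1 - useq_aux A q f k.+1 =
   q ^+ k.+1 *: (invmx (Ta A (q ^+ k.+1)) *m (useq_aux A q fd k - useq_aux A q f k))
   + invmx (Ta A (q ^+ k.+1)) *m (A^T *m (fd - f)).
  by rewrite /= !mulmxBr scalerBr opprD addrACA.
apply: le_trans (enorm_triangle _ _) _.
apply: lerD; first exact: bound1.
rewrite -sqrtX ?(ltW hq) //; exact: bound2.
Qed.

Lemma err_inv (R : rcfType) m (A : 'M[R]_m) (q : R) (fd f : 'cV[R]_m) delta k :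
  0 < q -> q < 1 -> enorm (fd - f) <= delta ->
  2 * (1 - Num.sqrt q) * Num.sqrt q ^+ k *
     enorm (useq_aux A q fd k - useq_aux A q f k)
  <= delta * (1 - Num.sqrt q ^+ k).
Proof.
move=> hq hq1 hd.
have hs : 0 < Num.sqrt q by rewrite sqrtr_gt0.
have hs1 : 0 < 1 - Num.sqrt q by rewrite subr_gt0 -sqrtr1 ltr_sqrt.
elim: k => [|k IH].
  by rewrite /= subrr enorm0 mulr0 expr0 subrr mulr0.
set s := Num.sqrt q in hs hs1 IH *.
have st := err_step A fd f k hq; rewrite -/s in st.
have st2 : enorm (useq_aux A q fd k.+1 - useq_aux A q f k.+1)
   <= enorm (useq_aux A q fd k - useq_aux A q f k) + delta / (2 * s ^+ k.+1).
  apply: le_trans st _; rewrite lerD2l; apply: ler_wpM2r hd.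
  by rewrite invr_ge0 mulr_ge0 // exprn_ge0 // ltW.
have P0 : 0 <= 2 * (1 - s) * s ^+ k.+1.
  by rewrite !mulr_ge0 ?exprn_ge0 // ltW.
apply: le_trans (ler_wpM2l P0 st2) _.
rewrite mulrDr exprS perm1 cancel2 ?mulf_neq0 ?expf_neq0 ?gt_eqF //.
rewrite -ident3; apply: lerD => //.
by rewrite ler_pM2l.
Qed.

Unset Implicit Arguments. Set Strict Implicit.

Theorem lemma3p2 (R : rcfType) (m : nat) (A : 'M[R]_m) (f fd : 'cV[R]_m)
    (delta q : R) :
  enorm (fd - f) <= delta -> 0 < q -> q < 1 ->
  forall n : nat, (1 <= n)%N ->
    enorm (useq A q fd n - useq A q f n)
      <= Num.sqrt q / (1 - Num.sqrt q) * (delta / (2 * Num.sqrt (q ^+ n))).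
Proof.
move=> hd hq hq1 [|k] // _.
rewrite /useq /=.
have I := @err_inv R m A q fd f delta k hq hq1 hd.
have hs : 0 < Num.sqrt q by rewrite sqrtr_gt0.
have hs1 : 0 < 1 - Num.sqrt q by rewrite subr_gt0 -sqrtr1 ltr_sqrt.
have hdel : 0 <= delta by apply: le_trans hd; apply: enorm_ge0.
set s := Num.sqrt q in I hs hs1 *.
set E := enorm _ in I *.
have I2 : 2 * (1 - s) * s ^+ k * E <= delta.
  apply: le_trans I _; apply: ler_piMr => //.
  by rewrite gerBl exprn_ge0 // ltW.
rewrite sqrtX ?(ltW hq) // -/s exprS.
rewrite (mulrA (s / (1 - s)) delta) ler_pdivlMr ?mulr_gt0 ?exprn_gt0 //.
rewrite [s / (1 - s) * delta]mulrAC ler_pdivlMr // perm2.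
by rewrite ler_pM2l.
Qed.
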